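(* There exists an instance of $P_n\,|\,\mathrm{conc}, p_j=1\,|\,L_{\max}$ whose conflict graph $G$ has treewidth $1$ and in which every optimal schedule has makespan $C_{\max}=\log n+1$, where $n$ is the number of jobs.
   Context: In $P_n\,|\,\mathrm{conc}, p_j=1\,|\,L_{\max}$, jobs $\{1,\dots,n\}$ have processing time $1$, release time $0$ and integer due dates $d_j$; there is a conflict graph $G$ on the jobs, and a schedule $C:\{1,\dots,n\}\to\mathbb{N}_{\ge1}$ is feasible iff $C(i)\ne C(j)$ for every edge $\{i,j\}$ of $G$. The objective $L_{\max}=\max_j (C_j-d_j)$ is minimized; $C_{\max}=\max_j C_j$. $\log$ is base $2$. *)

(* Defs.v *)
From mathcomp Require Import all_boot all_order all_algebra.
Set Implicit Arguments. Unset Strict Implicit. Unset Printing Implicit Defensive.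
Import Order.TTheory GRing.Theory Num.Theory.

Definition simple_graph (V : finType) (G : rel V) : Prop :=
  (forall x, ~~ G x x) /\ (forall x y, G x y = G y x).

(* A tree on 'I_m: nonempty, simple, connected, with exactly m-1 edges
   (counted as 2(m-1) ordered adjacent pairs). *)
Definition is_tree (m : nat) (T : rel 'I_m) : Prop :=
  0 < m /\ simple_graph T /\ (forall i j, connect T i j) /\
  #|[set p : 'I_m * 'I_m | T p.1 p.2]| = 2 * (m - 1).

Definition tree_decomposition (V : finType) (G : rel V)
    (m : nat) (T : rel 'I_m) (B : 'I_m -> {set V}) : Prop :=
  is_tree T /\
  (forall v, exists i, v \in B i) /\
  (forall u v, G u v -> exists i, (u \in B i) && (v \in B i)) /\
  (forall v i j, v \in B i -> v \in B j ->
     connect [rel a b | [&& T a b, v \in B a & v \in B b]] i j).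

Definition tw_le (V : finType) (G : rel V) (k : nat) : Prop :=
  exists m (T : rel 'I_m) (B : 'I_m -> {set V}),
    tree_decomposition G T B /\ forall i, #|B i| <= k.+1.

Definition treewidth_eq (V : finType) (G : rel V) (k : nat) : Prop :=
  tw_le G k /\ forall k', k' < k -> ~ tw_le G k'.

Definition feasible (n : nat) (G : rel 'I_n) (C : 'I_n -> nat) : Prop :=
  (forall j, 0 < C j) /\ (forall i j, G i j -> C i != C j).

Definition Cmax (n : nat) (C : 'I_n -> nat) : nat := \max_(j < n) C j.

Definition Lmax (n : nat) (d : 'I_n -> int) (C : 'I_n -> nat) : int :=
  match [seq ((C j)%:Z - d j)%R | j <- enum 'I_n] with
  | [::] => 0%R
  | x :: s => foldr Num.max x s
  end.

Definition optimal (n : nat) (G : rel 'I_n) (d : 'I_n -> int)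
    (C : 'I_n -> nat) : Prop :=
  feasible G C /\ forall C', feasible G C' -> (Lmax d C <= Lmax d C')%R.

(* Main.v *)
Require Import Defs.
From mathcomp Require Import all_boot all_order all_algebra zify.
Set Implicit Arguments. Unset Strict Implicit. Unset Printing Implicit Defensive.
Import Order.TTheory GRing.Theory Num.Theory.

Lemma logn_char m j : 0 < m -> 2 ^ j %| m -> ~~ (2 ^ j.+1 %| m) -> logn 2 m = j.
Proof.
move=> m0; rewrite !pfactor_dvdn // => h1 h2; apply/eqP; rewrite eqn_leq h1 andbT.
by rewrite leqNgt.
Qed.

Lemma logn_lt m k : 0 < m -> m < 2 ^ k -> logn 2 m < k.
Proof.
move=> m0 mk; rewrite -(ltn_exp2l _ _ (isT : 1 < 2)).
exact: leq_ltn_trans (dvdn_leq m0 (pfactor_dvdnn 2 m)) mk.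
Qed.

Lemma logn_par v : 0 < v -> 0 < v - 2 ^ logn 2 v ->
  logn 2 v < logn 2 (v - 2 ^ logn 2 v).
Proof.
set t := logn 2 v => v0 p0.
have hd : 2 ^ t %| v by exact: pfactor_dvdnn.
have hn : ~~ (2 ^ t.+1 %| v) by rewrite pfactor_dvdn // ltnn.
rewrite -(@pfactor_dvdn 2 t.+1 _ isT p0).
move: hd hn p0 => /dvdnP [q ->].
rewrite expnS => hn p0.
have qo : odd q.
  apply: contraR hn => qe.
  rewrite -[q]odd_double_half (negbTE qe) add0n -muln2 -mulnA [2 * _]mulnC.
  by apply: dvdn_mull.
have -> : q * 2 ^ t - 2 ^ t = q./2 * (2 * 2 ^ t).
  rewrite -[q in LHS]odd_double_half qo -muln2.
  set X := 2 ^ t. nia.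
exact: dvdn_mull.
Qed.

Lemma child_facts k v j : v < 2 ^ k ->
  j < (if v == 0 then k else logn 2 v) ->
  [/\ v + 2 ^ j < 2 ^ k, logn 2 (v + 2 ^ j) = j & v + 2 ^ j - 2 ^ j = v].
Proof.
move=> vk; rewrite addnK.
have hj0 : 0 < v + 2 ^ j by rewrite addn_gt0 expn_gt0 orbT.
case: eqP => [-> | /eqP v0] jr.
  by rewrite add0n ltn_exp2l // pfactorK.
rewrite -lt0n in v0.
set t := logn 2 v in jr.
have tk : t < k by exact: logn_lt.
have hd : 2 ^ t %| v by exact: pfactor_dvdnn.
have hj1 : 2 ^ j.+1 %| v by apply: dvdn_trans hd; apply: dvdn_exp2l.
split.
- move: hd vk => /dvdnP [q ->].
  rewrite -(subnK (ltnW tk)) expnD => lt.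
  have X0 : 0 < 2 ^ t by rewrite expn_gt0.
  have qlt : q < 2 ^ (k - t) by rewrite -(ltn_pmul2r X0).
  have : 2 ^ j < 2 ^ t by rewrite ltn_exp2l.
  set X := 2 ^ t in X0 lt qlt *; set Y := 2 ^ (k - t) in lt qlt *; nia.
- apply: logn_char => //.
  + rewrite dvdn_addr ?dvdnn //; apply: dvdn_trans hj1; apply: dvdn_exp2l; exact: leqnSn.
  + rewrite (dvdn_addr _ hj1) pfactor_dvdn ?expn_gt0 // (pfactorK j (isT : prime 2)) ltnn //.
- by [].
Qed.

Lemma foldr_max_in (x : int) s y : y \in x :: s -> (y <= foldr Num.max x s)%R.
Proof.
elim: s y => [|a s IH] y /=; first by rewrite inE => /eqP ->.
rewrite !inE le_max => /or3P [/eqP -> | /eqP -> | h].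
- by apply/orP; right; apply: IH; rewrite inE eqxx.
- by rewrite lexx.
- by apply/orP; right; apply: IH; rewrite inE h orbT.
Qed.

Lemma foldr_max_le (x : int) s b : (x <= b)%R -> all (fun y => y <= b)%R s ->
  (foldr Num.max x s <= b)%R.
Proof.
move=> xb; elim: s => [|a s IH] //= /andP [ab h].
by rewrite ge_max ab IH.
Qed.

Lemma Lmax_ge n (d : 'I_n -> int) C j : ((C j)%:Z - d j <= Lmax d C)%R.
Proof.
rewrite /Lmax.
have : ((C j)%:Z - d j)%R \in [seq ((C j)%:Z - d j)%R | j <- enum 'I_n].
  by apply: map_f; rewrite mem_enum.
case: [seq _ | _ <- _] => [//| x s]; exact: foldr_max_in.
Qed.

Lemma Lmax_le n (d : 'I_n -> int) C (b : int) :
  (forall j, ((C j)%:Z - d j <= b)%R) -> (0 <= b)%R -> (Lmax d C <= b)%R.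
Proof.
move=> h b0; rewrite /Lmax.
have : all (fun y => y <= b)%R [seq ((C j)%:Z - d j)%R | j <- enum 'I_n].
  by apply/allP => y /mapP [j _ ->].
case: [seq _ | _ <- _] => [//| x s] /= /andP [xb hs]; exact: foldr_max_le.
Qed.

Section BT.
Variable k : nat.
Notation n := (2 ^ k).

Definition par (v : 'I_n) : 'I_n :=
  Ordinal (leq_ltn_trans (leq_subr (2 ^ logn 2 v) v) (ltn_ord v)).
Definition bt : rel 'I_n := fun a b =>
  ((0 < b) && (a == par b)) || ((0 < a) && (b == par a)).
Definition rk (v : 'I_n) : nat := if val v == 0 then k else logn 2 v.
Definition z0 : 'I_n := Ordinal (expn_gt0 2 k).

Lemma par_lt (v : 'I_n) : 0 < v -> par v < v.
Proof. by move=> v0; rewrite /= ltn_subrL expn_gt0 v0. Qed.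

Lemma par0 (v : 'I_n) : val v = 0 -> par v = v.
Proof. by move=> h; apply: val_inj => /=; rewrite h. Qed.

Lemma rk_le v : rk v <= k.
Proof.
rewrite /rk; case: eqP => // /eqP; rewrite -lt0n => v0.
exact/ltnW/logn_lt.
Qed.

Lemma rk_par (v : 'I_n) : 0 < v -> rk v < rk (par v).
Proof.
move=> v0; rewrite /rk /= (negbTE (lt0n_neq0 v0)).
case: eqP => [_ | /eqP h]; first exact: logn_lt.
by apply: logn_par; rewrite // lt0n.
Qed.

Lemma bt_rk a b : bt a b -> rk a != rk b.
Proof.
by case/orP => /andP [h /eqP ->]; have := rk_par h; rewrite neq_ltn => ->; rewrite ?orbT.
Qed.

Lemma bt_sym : symmetric bt.
Proof. by move=> a b; rewrite /bt orbC. Qed.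

Lemma bt_irr x : ~~ bt x x.
Proof.
rewrite /bt orbb; apply/negP => /andP [h /eqP e].
by have := par_lt h; rewrite -e ltnn.
Qed.

Lemma child (v : 'I_n) j : j < rk v -> exists u, bt v u && (rk u == j).
Proof.
move=> jr; have [h1 h2 h3] := child_facts (ltn_ord v) jr.
exists (Ordinal h1); apply/andP; split.
  apply/orP; left; apply/andP; split; first by rewrite addn_gt0 expn_gt0 orbT.
  by apply/eqP/val_inj; rewrite /= h2 h3.
rewrite /rk /= addn_eq0 expn_eq0 andbF.
by rewrite h2.
Qed.

Lemma conn0 (v : 'I_n) : connect bt v z0.
Proof.
have : forall m (v : 'I_n), val v <= m -> connect bt v z0; last by apply; apply: leqnn.
elim=> [|m IH] w.
  by rewrite leqn0 => /eqP h; have -> : w = z0 by apply: val_inj.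
case: (posnP w) => [h _|w0 wm]; first by have -> : w = z0 by apply: val_inj.
apply: connect_trans (IH (par w) _); last by have := par_lt w0; move: wm => h1 h2; rewrite -ltnS; exact: leq_trans h2 h1.
by apply: connect1; rewrite /bt w0 eqxx orbT.
Qed.

Lemma bt_tree : is_tree bt.
Proof.
split; first exact: expn_gt0.
split; first by split; [exact: bt_irr | exact: bt_sym].
split.
  move=> i j; apply: connect_trans (conn0 i) _.
  by rewrite (sym_connect_sym bt_sym); exact: conn0.
set P := [set v : 'I_n | 0 < v].
have cP : #|P| = n - 1.
  have -> : P = [set~ z0] by apply/setP => v; rewrite !inE -val_eqE /= lt0n.
  by rewrite cardsC1 card_ord subn1.
have -> : [set p : 'I_n * 'I_n | bt p.1 p.2] =
   [set (par v, v) | v in P] :|: [set (v, par v) | v in P].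
  apply/setP => [[a b]]; rewrite !inE /bt /=; apply/orP/orP => [[]|[]].
  - by case/andP=> b0 /eqP ->; left; apply/imsetP; exists b; rewrite ?inE.
  - by case/andP=> a0 /eqP ->; right; apply/imsetP; exists a; rewrite ?inE.
  - by case/imsetP => v; rewrite inE => v0 [-> ->]; left; rewrite v0 eqxx.
  - by case/imsetP => v; rewrite inE => v0 [-> ->]; right; rewrite v0 eqxx.
rewrite cardsU !card_imset; last by move=> x y [].
  2: by move=> x y [].
have -> : [set (par v, v) | v in P] :&: [set (v, par v) | v in P] = set0.
  apply/setP => [[a b]]; rewrite !inE; apply/negP => /andP [].
  case/imsetP => v; rewrite inE => v0 [-> ->].
  case/imsetP => w; rewrite inE => w0 [e1 e2].
  have h1 := par_lt v0; have h2 := par_lt w0; rewrite e1 in h1; rewrite -e2 in h2.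
  by have := ltn_trans h1 h2; rewrite ltnn.
by rewrite cards0 cP subn0 mul2n addnn.
Qed.

Definition bag (v : 'I_n) : {set 'I_n} := [set v; par v].

Lemma bt_td : tree_decomposition bt bt bag.
Proof.
split; first exact: bt_tree.
split; first by move=> v; exists v; rewrite !inE eqxx.
split.
  move=> u v; case/orP => /andP [h /eqP ->].
    by exists v; rewrite !inE !eqxx orbT.
  by exists u; rewrite !inE !eqxx orbT.
move=> v i j.
set R := [rel a b | [&& bt a b, v \in bag a & v \in bag b]].
have hv : v \in bag v by rewrite !inE eqxx.
have H : forall i, v \in bag i -> connect R i v /\ connect R v i.
  move=> w; rewrite !inE => /orP [/eqP -> | /eqP e]; first by split; apply: connect0.
  case: (posnP w) => [w0 | w0].
    have : par w = w by apply: par0.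
    by move=> e'; rewrite e e'; split; apply: connect0.
  have hw : v \in bag w by rewrite !inE e eqxx orbT.
  split; apply: connect1; rewrite /= hv hw /bt w0 e eqxx ?orbT //.
move=> /H [h1 _] /H [_ h2]; exact: connect_trans h1 h2.
Qed.

Lemma bt_tw1 : 0 < k -> treewidth_eq bt 1.
Proof.
move=> k0; split.
  exists n, bt, bag; split; first exact: bt_td.
  by move=> i; rewrite cards2; case: (_ != _).
move=> k'; rewrite ltnS leqn0 => /eqP -> [m [T [B [[_ [_ [hE _]]] hB]]]].
have o1 : 1 < n by rewrite -{1}(expn0 2) ltn_exp2l.
have e : bt z0 (Ordinal o1).
  by apply/orP; left; apply/andP; split => //; apply/eqP/val_inj.
have [i /andP [a b]] := hE _ _ e.
have : [set z0; Ordinal o1] \subset B i.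
  by apply/subsetP => x; rewrite !inE => /orP [] /eqP ->.
move/subset_leq_card; rewrite cards2.
have -> : (z0 != Ordinal o1) by rewrite -val_eqE.
by move=> h; have := leq_trans h (hB i).
Qed.

Definition dd (v : 'I_n) : int := (rk v).+1%:Z.

Lemma opt_sched (C : 'I_n -> nat) : optimal bt dd C -> forall v, C v = (rk v).+1.
Proof.
move=> [[Cpos Cf] Copt].
have C0f : feasible bt (fun v => (rk v).+1).
  by split => // i j /bt_rk; rewrite eqSS.
have hle : forall v, C v <= (rk v).+1.
  move=> v.
  have h1 := Lmax_ge dd C v.
  have h2 := Copt _ C0f.
  have h3 : (Lmax dd (fun v => (rk v).+1) <= 0)%R.
    by apply: Lmax_le => // j; rewrite /dd subrr.
  have := le_trans h1 (le_trans h2 h3).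
  by rewrite subr_le0 /dd lez_nat.
have : forall r v, rk v <= r -> C v = (rk v).+1; last by move=> H v; apply: (H (rk v)).
elim=> [|r IH] v hv.
  apply/eqP; rewrite eqn_leq hle /=.
  by move: hv; rewrite leqn0 => /eqP ->; exact: Cpos.
case: (ltnP (rk v) r.+1) => [hr|hr]; first by apply: IH.
apply/eqP; rewrite eqn_leq hle /= leqNgt; apply/negP => hc.
have hp := Cpos v.
have hj : (C v).-1 < rk v by lia.
have [u /andP [e /eqP ru]] := child hj.
have := Cf _ _ e; rewrite (IH u); last by rewrite ru; lia.
by rewrite ru; lia.
Qed.

End BT.

Theorem lemma4 :
  forall N : nat,
  exists (n : nat) (G : rel 'I_n) (d : 'I_n -> int),
    N <= n /\ simple_graph G /\ treewidth_eq G 1 /\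
    forall C : 'I_n -> nat, optimal G d C ->
      0 < Cmax C /\ 2 ^ (Cmax C).-1 = n.
Proof.
move=> N; exists (2 ^ N.+1), (@bt N.+1), (@dd N.+1).
split; first by apply: leq_trans (ltnW (ltn_expl N (isT : 1 < 2))) _; rewrite leq_exp2l.
split; first by split; [exact: bt_irr | exact: bt_sym].
split; first exact: bt_tw1.
move=> C hC; have hs := opt_sched hC.
have -> : Cmax C = N.+2.
  apply/eqP; rewrite /Cmax eqn_leq; apply/andP; split.
    by apply/bigmax_leqP => i _; rewrite hs ltnS rk_le.
  by rewrite (bigD1 (z0 N.+1)) //= hs /rk /= leq_max ltnSn.
by [].
Qed.
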